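(* Let $a>0$, $\mu\in(0,1]$, $\phi\in\mathscr A(a,\mu)$ and $b\ge1$. Then for every local stable leaf $\gamma$ and all $\rho_1,\rho_2\in\mathcal D(a,\mu,\gamma)$, $$\frac{\int_\gamma\phi\rho_1}{\int_\gamma\phi\rho_2}\le e^{b\,\theta_a(\rho_1,\rho_2)}\,\frac{\int_\gamma\rho_1}{\int_\gamma\rho_2}.$$
   Context: Local stable leaves $\gamma$ are the local stable manifolds of points of a uniformly hyperbolic set $\Lambda$ of a $C^2$ diffeomorphism $f$ of a compact Riemannian manifold (embedded disks with induced Riemannian measure $m_\gamma$); $\int_\gamma\phi\rho:=\int_\gamma\phi\rho\,dm_\gamma$; $d$ is the Riemannian distance, with $d\le1$ on the relevant domain $Q$. $\mathcal D(a,\mu,\gamma):=\{\rho:\gamma\to\mathbb R:\ \rho>0,\ \rho(x)\le\rho(y)e^{a d(x,y)^\mu}\ \forall x,y\in\gamma\}$ and $\mathscr A(a,\mu):=\{\phi:Q\to\mathbb R:\ \int_\gamma\phi\rho>0$ for every local stable leaf $\gamma$ and every $\rho\in\mathcal D(a,\mu,\gamma)\}$. Hilbert projective metric of a convex cone $C$: write $v\preceq w$ if $w-v\in C\cup\{0\}$; $\alpha(v_1,v_2):=\sup\{t>0: tv_1\preceq v_2\}$, $\beta(v_1,v_2):=\inf\{s>0: v_2\preceq sv_1\}$, $\theta(v_1,v_2):=\log(\beta/\alpha)$ (with value $+\infty$ if $\alpha=0$ or $\beta=\infty$). $\theta_a$ denotes the Hilbert projective metric of the cone $\mathcal D(a,\mu,\gamma)$.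 *)

(* Defs.v *)
From HB Require Import structures.
From mathcomp Require Import all_boot all_order all_algebra.
From mathcomp Require Import all_classical all_reals all_analysis.
Set Implicit Arguments. Unset Strict Implicit. Unset Printing Implicit Defensive.
Import Order.TTheory GRing.Theory Num.Theory.
Import numFieldNormedType.Exports.
Local Open Scope classical_set_scope.
Local Open Scope ring_scope.

(* Abstract setting: ambient measurable space M (the manifold), Riemannian
   distance [dist], a local stable leaf [gam] (a subset of M) carrying its
   induced Riemannian measure [m]. Densities on the leaf are represented as
   functions M -> R of which only the values on [gam] matter. *)

Definition leaf_int d (M : measurableType d) (R : realType)
  (m : {measure set M -> \bar R}) (gam : set M) (f : M -> R) : R :=
  Rintegral m gam f.

(* The cone D(a, mu, gam).  Densities are taken measurable on the leaf
   (needed for the integrals to make sense). *)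
Definition inD d (M : measurableType d) (R : realType) (dist : M -> M -> R)
  (a mu : R) (gam : set M) (rho : M -> R) : Prop :=
  measurable_fun gam rho /\
  (forall x, gam x -> 0 < rho x) /\
  (forall x y, gam x -> gam y -> rho x <= rho y * expR (a * (dist x y) `^ mu)).

Definition inA d (M : measurableType d) (R : realType) (dist : M -> M -> R)
  (Lf : Type) (gam : Lf -> set M) (m : Lf -> {measure set M -> \bar R})
  (a mu : R) (phi : M -> R) : Prop :=
  forall (l : Lf) (rho : M -> R), inD dist a mu (gam l) rho ->
    0 < leaf_int (m l) (gam l) (fun x => phi x * rho x).

(* Partial order of the cone D(a,mu,gam): v <= w iff w - v in D u {0}
   (functions being identified when equal on the leaf). *)
Definition cone_le d (M : measurableType d) (R : realType) (dist : M -> M -> R)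
  (a mu : R) (gam : set M) (v w : M -> R) : Prop :=
  inD dist a mu gam (fun x => w x - v x) \/ (forall x, gam x -> w x - v x = 0).

Definition hilbert_alpha d (M : measurableType d) (R : realType)
  (dist : M -> M -> R) (a mu : R) (gam : set M) (v1 v2 : M -> R) : \bar R :=
  ereal_sup [set t%:E | t in
    [set t : R | 0 < t /\ cone_le dist a mu gam (fun x => t * v1 x) v2]].

Definition hilbert_beta d (M : measurableType d) (R : realType)
  (dist : M -> M -> R) (a mu : R) (gam : set M) (v1 v2 : M -> R) : \bar R :=
  ereal_inf [set s%:E | s in
    [set s : R | 0 < s /\ cone_le dist a mu gam v2 (fun x => s * v1 x)]].

(* theta_a(v1, v2) = log(beta/alpha), equal to +oo when alpha = 0
   (or the defining set is empty) or beta = +oo. *)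
Definition hilbert_theta d (M : measurableType d) (R : realType)
  (dist : M -> M -> R) (a mu : R) (gam : set M) (v1 v2 : M -> R) : \bar R :=
  match hilbert_alpha dist a mu gam v1 v2, hilbert_beta dist a mu gam v1 v2 with
  | EFin al, EFin be => if 0 < al then (ln (be / al))%:E else +oo%E
  | _, _ => +oo%E
  end.

(* Main.v *)
Require Import Defs.
From HB Require Import structures.
From mathcomp Require Import all_boot all_order all_algebra.
From mathcomp Require Import all_classical all_reals all_analysis.
Import Order.TTheory GRing.Theory Num.Theory.
Import numFieldNormedType.Exports.
Local Open Scope classical_set_scope.
Local Open Scope ring_scope.
Set Implicit Arguments.

Lemma inD_bounds d (M : measurableType d) (R : realType)
  (dist : M -> M -> R) (Q G : set M) (a mu : R) (rho : M -> R)
  (Hdist : forall x y, Q x -> Q y -> 0 <= dist x y <= 1)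
  (HGQ : G `<=` Q) (Ha : 0 < a) (Hmu : 0 < mu) :
  inD dist a mu G rho ->
  forall y, G y -> forall x, G x -> rho y / expR a <= rho x <= rho y * expR a.
Proof.
move=> [_ [Hpos Hlip]] y Gy x Gx.
have key : forall u v, G u -> G v -> rho u <= rho v * expR a.
  move=> u v Gu Gv; apply: (le_trans (Hlip u v Gu Gv)).
  rewrite ler_pM2l ?Hpos // ler_expR.
  have /andP[d0 d1] := Hdist u v (HGQ u Gu) (HGQ v Gv).
  have : dist u v `^ mu <= 1.
    have h1 : (1:R) `^ mu = 1 by rewrite powR1.
    rewrite -[X in _ <= X]h1.
    have := @ge0_ler_powR R mu (ltW Hmu) (dist u v) 1.
    by apply; rewrite ?nnegrE ?d0 ?ler01 ?d1.
  move=> h; rewrite -[leRHS]mulr1 ler_pM2l //.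
apply/andP; split; last exact: key.
by rewrite ler_pdivrMr ?expR_gt0 //; apply: key.
Qed.

Lemma inD_bounded d (M : measurableType d) (R : realType)
  (dist : M -> M -> R) (Q G : set M) (a mu : R) (rho : M -> R)
  (Hdist : forall x y, Q x -> Q y -> 0 <= dist x y <= 1)
  (HGQ : G `<=` Q) (Ha : 0 < a) (Hmu : 0 < mu) :
  inD dist a mu G rho -> [bounded rho x | x in G].
Proof.
move=> hD; have [[y Gy]|nG] := pselect (exists y, G y).
  exists (rho y * expR a); split; first by rewrite num_real.
  move=> z zlt x Gx /=.
  have /andP[_ hx] := inD_bounds Hdist HGQ Ha Hmu hD y Gy x Gx.
  case: hD => [_ [Hpos _]].
  rewrite ger0_norm ?ltW ?Hpos //.
  exact: le_lt_trans hx zlt.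
exists 0; split; first by rewrite num_real.
by move=> z _ x Gx; exfalso; apply: nG; exists x.
Qed.

Lemma inD_integrable d (M : measurableType d) (R : realType)
  (dist : M -> M -> R) (Q G : set M) (a mu : R) (rho : M -> R)
  (m : {measure set M -> \bar R})
  (Hdist : forall x y, Q x -> Q y -> 0 <= dist x y <= 1)
  (HGQ : G `<=` Q) (Ha : 0 < a) (Hmu : 0 < mu) (mG : measurable G)
  (Hfin : (m G < +oo)%E) :
  inD dist a mu G rho -> m.-integrable G (EFin \o rho).
Proof.
move=> hD; apply: measurable_bounded_integrable => //.
  by case: hD.
exact: (inD_bounded Hdist HGQ Ha Hmu hD).
Qed.

Lemma inD_phi_integrable d (M : measurableType d) (R : realType)
  (dist : M -> M -> R) (Q G : set M) (a mu : R) (rho phi : M -> R)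
  (m : {measure set M -> \bar R})
  (Hdist : forall x y, Q x -> Q y -> 0 <= dist x y <= 1)
  (HGQ : G `<=` Q) (Ha : 0 < a) (Hmu : 0 < mu) (mG : measurable G)
  (Hphi : m.-integrable G (EFin \o phi)) :
  inD dist a mu G rho -> m.-integrable G (EFin \o (fun x => phi x * rho x)).
Proof.
move=> hD.
have := integrableMl mG Hphi (proj1 hD) (inD_bounded Hdist HGQ Ha Hmu hD).
by apply: eq_integrable => // x _ /=; rewrite EFinM.
Qed.

Lemma int_pos_measure d (M : measurableType d) (R : realType)
  (m : {measure set M -> \bar R}) (G : set M) (f : M -> R)
  (mG : measurable G) (If : m.-integrable G (EFin \o f)) :
  0 < Rintegral m G f -> (0 < m G)%E.
Proof.
move=> h; rewrite lt0e measure_ge0 andbT; apply/negP => /eqP m0.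
move: h; rewrite /Rintegral null_set_integral //; first by rewrite ltxx.
by case/integrableP: If.
Qed.

Lemma inD_int_pos d (M : measurableType d) (R : realType)
  (dist : M -> M -> R) (Q G : set M) (a mu : R) (rho : M -> R)
  (m : {measure set M -> \bar R})
  (Hdist : forall x y, Q x -> Q y -> 0 <= dist x y <= 1)
  (HGQ : G `<=` Q) (Ha : 0 < a) (Hmu : 0 < mu) (mG : measurable G)
  (Hfin : (m G < +oo)%E) (Hpos : (0 < m G)%E) :
  inD dist a mu G rho -> 0 < Rintegral m G rho.
Proof.
move=> hD.
have [[y Gy]|nG] := pselect (exists y, G y); last first.
  have G0 : G = set0 by apply/seteqP; split => x // Gx; apply: nG; exists x.
  by move: Hpos; rewrite G0 measure0 ltxx.
have hpos := proj1 (proj2 hD).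
set c := rho y / expR a.
have c0 : 0 < c by rewrite divr_gt0 ?hpos ?expR_gt0.
have ic : m.-integrable G (EFin \o (fun=> c)).
  apply: measurable_bounded_integrable => //; exact: bounded_cst.
apply: (@lt_le_trans _ _ (Rintegral m G (fun=> c))).
  rewrite Rintegral_cst // mulr_gt0 // fine_gt0 // Hpos Hfin //.
apply: (le_Rintegral mG ic (inD_integrable m Hdist HGQ Ha Hmu mG Hfin hD)).
move=> x Gx.
by have /andP[] := inD_bounds Hdist HGQ Ha Hmu hD y Gy x Gx.
Qed.

Lemma cone_int d (M : measurableType d) (R : realType)
  (dist : M -> M -> R) (G : set M) (a mu : R) (phi u v : M -> R)
  (m : {measure set M -> \bar R}) (mG : measurable G)
  (HAs : forall rho, inD dist a mu G rho ->
     0 < Rintegral m G (fun x => phi x * rho x))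
  (iu : m.-integrable G (EFin \o u)) (iv : m.-integrable G (EFin \o v))
  (ipu : m.-integrable G (EFin \o (fun x => phi x * u x)))
  (ipv : m.-integrable G (EFin \o (fun x => phi x * v x))) :
  cone_le dist a mu G u v ->
  Rintegral m G u <= Rintegral m G v /\
  Rintegral m G (fun x => phi x * u x) <= Rintegral m G (fun x => phi x * v x).
Proof.
move=> hc.
have pw : forall x, G x -> 0 <= v x - u x.
  by case: hc => [[_ [Hp _]]|Hz] x Gx; [exact: ltW (Hp x Gx)|rewrite Hz].
split.
  rewrite -subr_ge0 -RintegralB //; exact: Rintegral_ge0.
rewrite -subr_ge0 -RintegralB //.
under eq_Rintegral do rewrite -mulrBr.
case: hc => [hD|Hz]; first exact: ltW (HAs _ hD).
have -> : Rintegral m G (fun x => phi x * (v x - u x)) = Rintegral m G (fun=> 0).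
  by apply: eq_Rintegral => x; rewrite inE => Gx /=; rewrite Hz // mulr0.
by rewrite Rintegral_cst // mul0r.
Qed.

Lemma intZ d (M : measurableType d) (R : realType)
  (m : {measure set M -> \bar R}) (G : set M) (mG : measurable G) (k : R) (f : M -> R) :
  m.-integrable G (EFin \o f) -> m.-integrable G (EFin \o (fun x => k * f x)).
Proof.
move=> hf; have := integrableZl mG k hf.
by apply: eq_integrable => // x _ /=; rewrite EFinM.
Qed.

Lemma intZphi d (M : measurableType d) (R : realType)
  (m : {measure set M -> \bar R}) (G : set M) (mG : measurable G) (k : R) (phi f : M -> R) :
  m.-integrable G (EFin \o (fun x => phi x * f x)) ->
  m.-integrable G (EFin \o (fun x => phi x * (k * f x))).
Proof.
move=> hf; have := intZ m mG k hf.
by apply: eq_integrable => // x _ /=; rewrite mulrCA.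
Qed.

Lemma RintZphi d (M : measurableType d) (R : realType)
  (m : {measure set M -> \bar R}) (G : set M) (mG : measurable G) (k : R) (phi f : M -> R) :
  m.-integrable G (EFin \o (fun x => phi x * f x)) ->
  Rintegral m G (fun x => phi x * (k * f x)) = k * Rintegral m G (fun x => phi x * f x).
Proof.
move=> hf; rewrite -RintegralZl //.
by apply: eq_Rintegral => x _; rewrite mulrCA.
Qed.

Unset Implicit Arguments.

Theorem lemma4p3 (d : measure_display) (M : measurableType d) (R : realType)
  (dist : M -> M -> R) (Q : set M)
  (Lf : Type) (gam : Lf -> set M) (m : Lf -> {measure set M -> \bar R})
  (Hdist : forall x y, Q x -> Q y -> 0 <= dist x y <= 1)
  (HgamQ : forall l, gam l `<=` Q)
  (Hgam_meas : forall l, measurable (gam l))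
  (Hm_fin : forall l, (m l (gam l) < +oo)%E)
  (a mu : R) (phi : M -> R) (b : R)
  (Hphi_int : forall l, (m l).-integrable (gam l) (EFin \o phi))
  (Ha : 0 < a) (Hmu : 0 < mu <= 1) (HA : inA dist gam m a mu phi) (Hb : 1 <= b) :
  forall (l : Lf) (rho1 rho2 : M -> R),
    inD dist a mu (gam l) rho1 -> inD dist a mu (gam l) rho2 ->
    ((leaf_int (m l) (gam l) (fun x => phi x * rho1 x)
       / leaf_int (m l) (gam l) (fun x => phi x * rho2 x))%:E
     <= expeR (b%:E * hilbert_theta dist a mu (gam l) rho1 rho2)
        * (leaf_int (m l) (gam l) rho1 / leaf_int (m l) (gam l) rho2)%:E)%E.
Proof.
move=> l rho1 rho2 h1 h2.
have HAs : forall rho, inD dist a mu (gam l) rho ->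
    0 < Rintegral (m l) (gam l) (fun x => phi x * rho x) := fun rho h => HA l rho h.
rewrite /leaf_int.
move: HAs h1 h2.
move: (Hgam_meas l) (Hm_fin l) (HgamQ l) (Hphi_int l).
set G := gam l; set mm := m l => mG Hfin HGQ Hphi HAs h1 h2.
have /andP[Hmu0 Hmu1] := Hmu.
have i1 := inD_integrable mm Hdist HGQ Ha Hmu0 mG Hfin h1.
have i2 := inD_integrable mm Hdist HGQ Ha Hmu0 mG Hfin h2.
have ip1 := inD_phi_integrable mm Hdist HGQ Ha Hmu0 mG Hphi h1.
have ip2 := inD_phi_integrable mm Hdist HGQ Ha Hmu0 mG Hphi h2.
have P0 := HAs _ h1; have Q0 := HAs _ h2.
have hmpos := int_pos_measure mm mG ip1 P0.
have I10 := inD_int_pos mm Hdist HGQ Ha Hmu0 mG Hfin hmpos h1.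
have I20 := inD_int_pos mm Hdist HGQ Ha Hmu0 mG Hfin hmpos h2.
set P := Rintegral mm G (fun x => phi x * rho1 x) in P0 *.
set Q2 := Rintegral mm G (fun x => phi x * rho2 x) in Q0 *.
set I1 := Rintegral mm G rho1 in I10 *.
set I2 := Rintegral mm G rho2 in I20 *.
have b0 : 0 < b by apply: lt_le_trans Hb.
have Hinf : ((P / Q2)%:E <= expeR (b%:E * +oo) * (I1 / I2)%:E)%E.
  by rewrite gt0_muley ?lte_fin // /= gt0_mulye ?lte_fin ?divr_gt0 // leey.
rewrite /hilbert_theta.
case Ea: (hilbert_alpha dist a mu G rho1 rho2) => [al| |]; try exact: Hinf.
case Eb: (hilbert_beta dist a mu G rho1 rho2) => [be| |]; try exact: Hinf.
case: ifP => hal; last exact: Hinf.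
have ial t : mm.-integrable G (EFin \o (fun x => t * rho1 x)) := intZ mm mG t i1.
have ipl t : mm.-integrable G (EFin \o (fun x => phi x * (t * rho1 x))) :=
  intZphi mm mG t phi rho1 ip1.
have hA : (hilbert_alpha dist a mu G rho1 rho2 <= (Q2 / P)%:E)%E /\
          (hilbert_alpha dist a mu G rho1 rho2 <= (I2 / I1)%:E)%E.
  split; apply/ereal_supP => _ [t [t0 ht] <-]; rewrite lee_fin;
  have [c1 c2] := @cone_int d M R dist G a mu phi _ rho2 mm mG HAs (ial t) i2 (ipl t) ip2 ht.
    by move: c2; rewrite RintZphi // -/P -/Q2 ler_pdivlMr.
  by move: c1; rewrite RintegralZl // -/I1 -/I2 ler_pdivlMr.
have hB : ((I2 / I1)%:E <= hilbert_beta dist a mu G rho1 rho2)%E.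
  apply/ereal_infP => _ [s [s0 hs] <-]; rewrite lee_fin.
  have [c1 _] := @cone_int d M R dist G a mu phi rho2 _ mm mG HAs i2 (ial s) ip2 (ipl s) hs.
  by move: c1; rewrite RintegralZl // -/I1 -/I2 ler_pdivrMr.
rewrite Ea Eb !lee_fin in hA hB.
case: hA => hu hv.
have be0 : 0 < be by apply: (lt_le_trans hal); apply: (le_trans hv).
set r := be / al.
have r1 : 1 <= r by rewrite /r ler_pdivlMr // mul1r; exact: le_trans hv hB.
have r0 : 0 < r by apply: lt_le_trans r1.
rewrite (_ : (b%:E * (ln r)%:E)%E = (b * ln r)%:E) //=.
rewrite (_ : ((expR (b * ln r))%:E * (I1 / I2)%:E)%E = (expR (b * ln r) * (I1 / I2))%:E) //.
rewrite lee_fin.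
set E := expR (b * ln r).
have Er : r <= E.
  rewrite /E -[leLHS]lnK ?posrE // ler_expR.
  by rewrite -[leLHS]mul1r ler_wpM2r // ln_ge0.
have u0 : 0 < Q2 / P by rewrite divr_gt0.
have v0 : 0 < I2 / I1 by rewrite divr_gt0.
rewrite -(invf_div Q2 P) -(invf_div I2 I1).
apply: (@le_trans _ _ (al^-1)).
  by rewrite lef_pV2 ?posrE.
apply: (@le_trans _ _ (r * be^-1)).
  by rewrite /r mulrAC divff ?mul1r // gt_eqF.
apply: ler_pM => //.
- exact: ltW.
- by rewrite invr_ge0 ltW.
- by rewrite lef_pV2 ?posrE.
Qed.
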